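(* Let $m\neq\pm1$ be a square-free integer, $p$ a prime, $k$ a positive integer, $\alpha$ a root of $X^{p^k}-m$ and $M=\mathbb{Q}(\alpha)$. Let $r$ be the remainder of $m$ modulo $p^{k+1}$ and $s:=v_p(m^p-m)-1$. For $t\in\mathbb{N}$ let $$h^{(r)}_t(X):=X^{p^k-p^{k-t}}+rX^{p^k-2p^{k-t}}+\ldots+r^{p^t-2}X^{p^{k-t}}+r^{p^t-1}=\frac{X^{p^k}-r^{p^t}}{X^{p^{k-t}}-r}\in\mathbb{Z}[X].$$ Then for every integer $t$ with $0\leq t\leq \min\{s,k\}$, the element $\frac{1}{p^t}h^{(r)}_t(\alpha)\in\mathbb{Q}(\alpha)$ is an algebraic integer.
   Context: $v_p$ denotes the $p$-adic valuation on $\mathbb{Q}$. *)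

(* Defs.v *)
From HB Require Import structures.
From mathcomp Require Import all_boot all_order all_algebra all_field.
Set Implicit Arguments. Unset Strict Implicit. Unset Printing Implicit Defensive.
Import Order.TTheory GRing.Theory Num.Theory.
Local Open Scope ring_scope.

Definition squarefree_int (m : int) : Prop :=
  m != 0 /\ forall q : nat, prime q -> ~~ (q * q %| `|m|)%N.

Definition h_poly (R : nzRingType) (p k t : nat) (r : R) : {poly R} :=
  \sum_(i < p ^ t) (r ^+ i) *: 'X^(p ^ (k - t) * (p ^ t - 1 - i)).

(* Main.v *)
Require Import Defs.
From HB Require Import structures.
From mathcomp Require Import all_boot all_order all_algebra all_field.
From mathcomp Require Import zify ring.
Import Order.TTheory GRing.Theory Num.Theory.
Local Open Scope ring_scope.
Lemma binom_dvd (p t j : nat) : prime p -> (j < p ^ t)%N ->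
  (p ^ t %| 'C(p ^ t, j) * p ^ (p ^ t - 1 - j))%N.
Proof.
move=> pp ljN; have p1 : (1 < p)%N := prime_gt1 pp.
set N := (p ^ t)%N in ljN *.
have N0 : (0 < N)%N by rewrite expn_gt0 ltnW.
case: j ljN => [|j] ljN.
  rewrite bin0 mul1n dvdn_exp2l //.
  have := ltn_expl t p1; rewrite -/N; lia.
set a := logn p j.+1.
have paj : (p ^ a %| j.+1)%N := pfactor_dvdnn p j.+1.
set u := (j.+1 %/ p ^ a)%N.
have ju : j.+1 = (u * p ^ a)%N by rewrite divnK.
have alt : (a < t)%N.
  rewrite -(ltn_exp2l _ _ p1) -/N.
  by apply: leq_ltn_trans ljN; apply: dvdn_leq.
have cpu : coprime (p ^ t) u.
  rewrite coprime_pexpl ?prime_coprime //; last by lia.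
  apply/negP => /dvdnP [v hv].
  have : (p ^ a.+1 %| j.+1)%N by rewrite ju hv expnS -mulnA mulnC dvdn_mull // dvdnn.
  by rewrite pfactor_dvdn // ltnn.
have hdiv : (N %| j.+1 * 'C(N, j.+1))%N.
  by rewrite -mul_bin_diag dvdn_mulr.
have hdiv2 : (N %| p ^ a * 'C(N, j.+1))%N.
  by move: hdiv; rewrite {1}ju -mulnA Gauss_dvdr.
have paN : (p ^ a %| N)%N by rewrite dvdn_exp2l // ltnW.
have paNj : (p ^ a %| N - j.+1)%N by rewrite dvdn_sub.
have hle : (p ^ a <= N - j.+1)%N by apply: dvdn_leq => //; rewrite subn_gt0.
have hal := ltn_expl a p1.
apply: (dvdn_trans hdiv2); rewrite mulnC dvdn_mul // dvdn_exp2l //.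
lia.
Qed.
Lemma dvdz_subXX (d a b : int) (n : nat) : (d %| a - b)%Z -> (d %| a ^+ n - b ^+ n)%Z.
Proof. by move=> h; rewrite subrXX dvdz_mulr. Qed.

Lemma key_cong (m : int) (p k t : nat) : prime p -> (t <= k)%N ->
  (p ^ t.+1 %| `|m ^+ p - m|)%N ->
  ((p ^ t.+1)%:Z %| m - ((m %% (p ^ k.+1)%:Z)%Z) ^+ (p ^ t))%Z.
Proof.
move=> pp tk hd.
set d := (p ^ t.+1)%:Z.
have h0 : (d %| m ^+ p - m)%Z by exact: hd.
have hrm : (d %| (m %% (p ^ k.+1)%:Z)%Z - m)%Z.
  have -> : ((m %% (p ^ k.+1)%:Z)%Z - m) = - ((m %/ (p ^ k.+1)%:Z)%Z * (p ^ k.+1)%:Z).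
    by rewrite {2}(divz_eq m (p ^ k.+1)%:Z) opprD addrCA subrr addr0.
  rewrite rpredN; apply: dvdz_mull.
  by rewrite dvdzE !absz_nat dvdn_exp2l.
have h2 : forall i, (d %| m ^+ (p ^ i) - m)%Z.
  elim=> [|i IH]; first by rewrite expn0 expr1 subrr dvdz0.
  have -> : m ^+ (p ^ i.+1) - m = ((m ^+ (p ^ i)) ^+ p - m ^+ p) + (m ^+ p - m).
    by rewrite expnS mulnC exprM addrA subrK.
  by rewrite rpredD // dvdz_subXX.
have -> : m - (m %% (p ^ k.+1)%:Z)%Z ^+ (p ^ t) =
   - (((m %% (p ^ k.+1)%:Z)%Z ^+ (p ^ t) - m ^+ (p ^ t)) + (m ^+ (p ^ t) - m)).
  by rewrite addrA subrK opprB.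
by rewrite rpredN rpredD // dvdz_subXX.
Qed.
Lemma not_pow (m r : int) (n : nat) : squarefree_int m -> m != 1 -> m != -1 ->
  (1 < n)%N -> m != r ^+ n.
Proof.
move=> [m0 sq] m1 m_1 n1; apply/eqP => hm.
have ha : `|m|%N = (`|r| ^ n)%N by rewrite hm abszX.
case: (ltngtP `|r|%N 1) => hr.
- have r0 : `|r|%N = 0%N by lia.
  move: ha; rewrite r0 exp0n ?(ltnW n1) // => /eqP; rewrite absz_eq0.
  by apply/negP.
- have q := pdiv_prime hr.
  have qd := pdiv_dvd `|r|%N.
  move: (sq _ q); rewrite ha.
  have -> : n = (n - 2).+2 by lia.
  by rewrite !expnS mulnA dvdn_mulr // dvdn_mul.
- move: ha; rewrite hr exp1n.
  by case: m m1 m_1 {hm m0 sq} => [[|[|]]|[|]].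
Qed.
Lemma PX (a b : nat) : (a ^ b)%:Z = a%:Z ^+ b.
Proof. by rewrite -!natz natrX. Qed.

Theorem lemma3p1 (m : int) (p k : nat) (alpha : algC) (t : nat) :
  squarefree_int m -> m != 1 -> m != -1 ->
  prime p -> (0 < k)%N ->
  root ('X^(p ^ k) - (m%:~R)%:P) alpha ->
  let r : int := (m %% (p ^ k.+1)%:Z)%Z in
  let s : int := (logn p `|m ^+ p - m|)%:Z - 1 in
  (t <= k)%N -> t%:Z <= s ->
  (p ^ t)%:R^-1 * (h_poly p k t (r%:~R : algC)).[alpha] \in Aint.
Proof.
move=> sqm m1 m_1 pp k0 hroot r s tk ts.
have p1 : (1 < p)%N := prime_gt1 pp.
case: (posnP t) => [t0|tpos].
  rewrite t0 /h_poly expn0 big_ord1 /= muln0 expr0 scale1r hornerC invr1 mul1r.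
  exact: Aint1.
set N := (p ^ t)%N.
have hN : (1 < N)%N by have := ltn_expl t p1; rewrite -/N; lia.
have hL : (t.+1 <= logn p `|m ^+ p - m|)%N by move: ts; rewrite /s; lia.
have hpos : (0 < `|m ^+ p - m|)%N.
  rewrite lt0n; apply/negP => /eqP h0; move: hL; by rewrite h0 logn0.
have hd : (p ^ t.+1 %| `|m ^+ p - m|)%N by rewrite pfactor_dvdn.
have /dvdzP [E hE] := key_cong m p k t pp tk hd.
set D : int := E * p%:Z.
have hD : m - r ^+ N = D * N%:Z by rewrite hE /D -mulrA -PoszM -expnS.
have D0 : D != 0.
  apply/negP => /eqP D0; move: hD; rewrite D0 mul0r => /eqP; rewrite subr_eq0.
  by apply/negP; apply: not_pow.
set R : algC := r%:~R.
set M : algC := m%:~R.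
set Dc : algC := D%:~R.
set P : algC := N%:R.
have P0 : P != 0 by rewrite /P pnatr_eq0 -lt0n expn_gt0 prime_gt0.
have Dc0 : Dc != 0 by rewrite /Dc intr_eq0.
have ha : alpha ^+ (p ^ k) = M.
  by move/rootP: hroot; rewrite !hornerE => /eqP; rewrite subr_eq0 => /eqP.
set beta := alpha ^+ (p ^ (k - t)).
have hb : beta ^+ N = M by rewrite -exprM -expnD subnK.
have hY : (h_poly p k t R).[alpha] = \sum_(i < N) beta ^+ (N.-1 - i) * R ^+ i.
  rewrite /h_poly horner_sum; apply: eq_bigr => i _.
  by rewrite hornerZ hornerXn exprM mulrC subn1.
have hMR : M - R ^+ N = Dc * P.
  by rewrite /M /R /Dc /P -rmorphXn -rmorphB /= hD rmorphM /=.
have hmul : (beta - R) * (h_poly p k t R).[alpha] = Dc * P.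
  by rewrite hY -subrXX -hMR -hb.
set x := P^-1 * (h_poly p k t R).[alpha].
have hx : (beta - R) * x = Dc.
  by rewrite /x mulrCA hmul mulrCA mulVf // mulr1.
clearbody x.
have hbx : beta * x = Dc + R * x.
  by move: hx; rewrite mulrBl => /eqP; rewrite subr_eq => /eqP.
have key : M * x ^+ N = (Dc + R * x) ^+ N.
  by rewrite -hbx exprMn -hb.
rewrite exprDn big_ord_recr /= subnn expr0 mul1r binn mulr1n in key.
set c : nat -> int := fun i =>
  (((('C(N, i) * p ^ (N - 1 - i)) %/ N)%N)%:Z * E ^+ (N - 1 - i) * r ^+ i).
have hcz : forall i, (i < N)%N ->
    c i * N%:Z = 'C(N, i)%:Z * D ^+ (N - 1 - i) * r ^+ i.
  move=> i hi; rewrite /c.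
  have hq := divnK (binom_dvd p t i pp hi); rewrite -/N in hq.
  rewrite mulrAC [_ * _ * N%:Z]mulrAC -PoszM hq PoszM PX /D exprMn.
  by rewrite [E ^+ _ * _]mulrC mulrA.
have hc : forall i, (i < N)%N ->
    (c i)%:~R * P = 'C(N, i)%:R * Dc ^+ (N - 1 - i) * R ^+ i.
  move=> i hi; rewrite /P /Dc /R.
  have e1 : forall n : nat, (n%:R : algC) = (n%:Z)%:~R by [].
  by rewrite !e1 -!rmorphXn -!rmorphM /= hcz.
have hxN : x ^+ N = \sum_(i < N) (c i)%:~R * x ^+ i.
  apply: (mulfI P0); apply: (mulfI Dc0).
  rewrite mulrA -hMR mulrBl key -exprMn addrK.
  rewrite !mulr_sumr; apply: eq_bigr => i _.
  rewrite [P * _]mulrA [P * _]mulrC (hc _ (ltn_ord i)).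
  have hi := ltn_ord i.
  have -> : (N - i = (N - 1 - i).+1)%N by lia.
  rewrite exprS exprMn -mulr_natr. ring.
pose Q := 'X^N - \poly_(i < N) ((c i)%:~R : algC).
apply: (@root_monic_Aint Q).
- by rewrite /root /Q !hornerE horner_poly hxN subrr.
- rewrite monicE lead_coefDl ?lead_coefXn // size_polyXn size_opp ltnS.
  exact: size_poly.
- apply/polyOverP => i; rewrite /Q coefB coefXn coef_poly.
  apply: rpredB; first by case: (_ == _); rewrite ?int_num1 ?int_num0.
  by case: ifP; rewrite ?intr_int ?int_num0.
Qed.
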